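(* For every integer $n>3$ there exists a latin square of order $n$ containing a cell that is not contained in any transversal of the square.
   Context: A latin square of order $n$ is an $n\times n$ array of $n$ symbols in which each symbol occurs exactly once in each row and column. A transversal is a set of $n$ cells, one from each row and one from each column, no two containing the same symbol. *)

(* Defs.v *)
From mathcomp Require Import all_boot all_fingroup.
Set Implicit Arguments. Unset Strict Implicit. Unset Printing Implicit Defensive.

(* A square array of order n with symbols in 'I_n: L i j is the symbol in row i, column j. *)
Definition latin_square (n : nat) (L : 'I_n -> 'I_n -> 'I_n) : Prop :=
  (forall i, injective (L i)) /\ (forall j, injective (fun i => L i j)).

(* A transversal: n cells, one per row and one per column, i.e. the cells
   (i, s i) for a permutation s of the columns, with pairwise distinct symbols. *)
Definition latin_transversal (n : nat) (L : 'I_n -> 'I_n -> 'I_n) (s : {perm 'I_n}) : Prop :=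
  injective (fun i => L i (s i)).

Definition cell_in_transversal (n : nat) (s : {perm 'I_n}) (r c : 'I_n) : Prop :=
  s r = c.

(* Main.v *)
Require Import Defs.
From mathcomp Require Import all_boot all_fingroup.
From Stdlib Require Import Lia.
Set Implicit Arguments. Unset Strict Implicit. Unset Printing Implicit Defensive.

Ltac tolia := repeat match goal with
  | H : is_true (_ <= _) |- _ => move/leP: H => H
  | H : is_true (_ == _) |- _ => move/eqP: H => H
  | H : (_ == _) = false |- _ => move/eqP: H => H
  | H : is_true (~~ (_ == _)) |- _ => move/eqP: H => H
  | |- is_true (_ <= _) => apply/leP
  | |- is_true (_ == _) => apply/eqP
  end; unfold addn, muln, subn in *; lia.

Definition sig0 (i j : nat) : nat :=
  if i == 0 then (if j == 0 then 0 else if j == 1 then 1 else if j == 2 then 2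
                  else if odd j then 0 else 2)
  else if i == 1 then (if j == 1 then 2 else if j == 2 then 0 else 1)
  else if i == 2 then (if j == 0 then 2 else if j == 1 then 0 else if j == 2 then 1
                  else if odd j then 2 else 0)
  else i.

Definition sig (n i j : nat) : nat := if odd n then sig0 i j else i.

Lemma sig0_big i j : 3 <= i -> sig0 i j = i.
Proof. by case: i => [|[|[|i]]]. Qed.

Lemma sig0_small i j : i < 3 -> sig0 i j <= 2.
Proof.
case: i => [|[|[|i]]] //= _; rewrite /sig0 /=;
case: j => [|[|[|j]]] //=; by case: (odd j).
Qed.

Lemma sig0_inj i1 i2 j : sig0 i1 j = sig0 i2 j -> i1 = i2.
Proof.
case: (ltnP i1 3) => h1; case: (ltnP i2 3) => h2.
- move: h1 h2; rewrite /sig0.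
  case: i1 => [|[|[|i1]]] //= _; case: i2 => [|[|[|i2]]] //= _;
  case: j => [|[|[|j]]] //=; by case: (odd j).
- rewrite (sig0_big j h2) => E. have ? := sig0_small j h1. tolia.
- rewrite (sig0_big j h1) => E. have ? := sig0_small j h2. tolia.
- by rewrite (sig0_big j h1) (sig0_big j h2).
Qed.

Lemma sig_inj n i1 i2 j : sig n i1 j = sig n i2 j -> i1 = i2.
Proof. rewrite /sig; case: (odd n) => //; exact: sig0_inj. Qed.

Lemma sig_lt n i j : 3 < n -> i < n -> sig n i j < n.
Proof.
move=> hn hi; rewrite /sig; case: (odd n) => //.
case: (ltnP i 3) => h; last by rewrite sig0_big.
have ? := sig0_small j h. tolia.
Qed.

Lemma modeq2 n x y : x < n + n -> y < n + n -> x %% n = y %% n ->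
  x = y \/ x = y + n \/ y = x + n.
Proof.
move=> hx hy.
case: (ltnP x n) => ax; case: (ltnP y n) => ay.
- by rewrite !modn_small //; left.
- rewrite (modn_small ax) -(subnK ay) modnDr modn_small; last by tolia.
  move=> E. right; right. tolia.
- rewrite (modn_small ay) -(subnK ax) modnDr modn_small; last by tolia.
  move=> E. right; left. tolia.
- rewrite -(subnK ax) -(subnK ay) !modnDr !modn_small; tolia.
Qed.

Lemma col_inj n i1 i2 j : 3 < n -> i1 < n -> i2 < n ->
  (sig n i1 j + j) %% n = (sig n i2 j + j) %% n -> i1 = i2.
Proof.
move=> hn h1 h2 /eqP; rewrite eqn_modDr !modn_small; try exact: sig_lt.
move/eqP; exact: sig_inj.
Qed.

Lemma sig0_01 j : sig0 0 j = 1 -> j = 1.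
Proof. rewrite /sig0 /=; case: j => [|[|[|j]]] //=; by case: (odd j). Qed.
Lemma sig0_21 j : sig0 2 j = 1 -> j = 2.
Proof. rewrite /sig0 /=; case: j => [|[|[|j]]] //=; by case: (odd j). Qed.

Lemma par j : exists a, j = a + a + odd j.
Proof. exists j./2. by rewrite addnn addnC odd_double_half. Qed.

Lemma row_inj n i j1 j2 : 3 < n -> j1 < n -> j2 < n ->
  (sig n i j1 + j1) %% n = (sig n i j2 + j2) %% n -> j1 = j2.
Proof.
move=> hn h1 h2. rewrite /sig. case On: (odd n); last first.
  by move/eqP; rewrite eqn_modDl !modn_small // => /eqP.
case: (ltnP i 3) => hi; last first.
  by rewrite !sig0_big // => /eqP; rewrite eqn_modDl !modn_small // => /eqP.
have s1 := sig0_small j1 hi; have s2 := sig0_small j2 hi.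
move=> E.
have B1 : sig0 i j1 + j1 < n + n by tolia.
have B2 : sig0 i j2 + j2 < n + n by tolia.
move: (modeq2 B1 B2 E) => {E B1 B2}.
have [a1 A1] := par j1; have [a2 A2] := par j2; have [k K] := par n.
rewrite On /= in K.
rewrite /sig0. case: i hi {s1 s2} => [|[|[|i]]] //= _;
move: A1 A2; case: (odd j1); case: (odd j2) => /= A1 A2;
repeat (case: ifP => [/eqP ?|/negbT/eqP ?]); move=> E; tolia.
Qed.

Lemma sumSS n : \sum_(i < n) (i : nat) + \sum_(i < n) (i : nat) + n = n * n.
Proof.
elim: n => [|n IH]; first by rewrite big_ord0.
rewrite big_ord_recr /=. move: IH.
set S := \sum_(i < n) _.
move=> IH. unfold addn, muln in *. nia.
Qed.

Theorem theorem1p4 (n : nat) (hn : 3 < n) :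
  exists L : 'I_n -> 'I_n -> 'I_n,
    latin_square L /\
    exists r c : 'I_n,
      forall s : {perm 'I_n}, latin_transversal L s -> ~ cell_in_transversal s r c.
Proof.
have n0 : 0 < n by tolia.
pose L := fun (i j : 'I_n) => Ordinal (ltn_pmod (sig n i j + j) n0).
exists L; split.
  split.
  - move=> i j1 j2 /(congr1 val) /= E. apply: val_inj.
    exact: row_inj hn (ltn_ord j1) (ltn_ord j2) E.
  - move=> j i1 i2 /(congr1 val) /= E. apply: val_inj.
    exact: col_inj hn (ltn_ord _) (ltn_ord _) E.
have h1 : 1 < n by tolia.
have h2 : 2 < n by tolia.
pose o0 := Ordinal n0; pose o1 := Ordinal h1; pose o2 := Ordinal h2.
exists o1, o1 => s Ht Hs.
rewrite /latin_transversal in Ht. rewrite /cell_in_transversal in Hs.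
have SS := sumSS n.
set S := \sum_(i < n) (i : nat) in SS.
have ES1 : \sum_(i < n) (L i (s i) : nat) = S.
  by rewrite /S [RHS](reindex_inj Ht).
have ES2 : \sum_(i < n) (s i : nat) = S.
  by rewrite /S [RHS](reindex_inj (@perm_inj _ s)).
have Emod : (\sum_(i < n) sig n i (s i)) %% n = 0.
  have : (0 + S) %% n = (\sum_(i < n) sig n i (s i) + S) %% n.
    rewrite add0n -{1}ES1 -ES2 -big_split /=.
    by rewrite modn_summ.
  by move/eqP; rewrite eqn_modDr mod0n => /eqP <-.
have [k K] := par n.
case On: (odd n) K => /= K; last first.
  have ES : \sum_(i < n) sig n i (s i) = S.
    by apply: eq_bigr => i _; rewrite /sig On.
  rewrite ES in Emod.
  have ST : S = S %/ n * n by rewrite {1}(divn_eq S n) Emod addn0.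
  set t := S %/ n in ST.
  have : n * (t + t + 1) = n * n by rewrite -SS ST; unfold addn, muln in *; lia.
  move/eqP; rewrite eqn_pmul2l // => /eqP. tolia.
have SM : S %% n = 0.
  have : n * (k + k + 1) = n * n by rewrite K.
  rewrite -SS. move=> E. have -> : S = n * k by unfold addn, muln in *; nia.
  by rewrite modnMr.
rewrite /S (bigD1 o0) // (bigD1 o1) // (bigD1 o2) // in SM.
rewrite (bigD1 o0) // (bigD1 o1) // (bigD1 o2) // in Emod.
rewrite /= in SM Emod.
set P3 := (fun i : 'I_n => true && (i != o0) && (i != o1) && (i != o2)) in SM Emod.
have ER : \sum_(i | P3 i) sig n i (s i) = \sum_(i | P3 i) (i : nat).
  apply: eq_bigr => i /andP[/andP[/andP[_ a] b] c].
  rewrite -(inj_eq val_inj) /= in a; rewrite -(inj_eq val_inj) /= in b;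
  rewrite -(inj_eq val_inj) /= in c.
  rewrite /sig On sig0_big //. tolia.
rewrite ER in Emod.
set R := \sum_(i | P3 i) (i : nat) in SM Emod.
have B1 : sig n o1 (s o1) = 2 by rewrite Hs /sig On.
rewrite B1 in Emod.
have A0 : sig n o0 (s o0) <= 2 by rewrite /sig On; apply: sig0_small.
have C0 : sig n o2 (s o2) <= 2 by rewrite /sig On; apply: sig0_small.
set a := sig n o0 (s o0) in Emod A0.
set c := sig n o2 (s o2) in Emod C0.
have E1 : (a + c + 2 + R) %% n = (3 + R) %% n.
  have -> : a + c + 2 + R = a + (2 + (c + R)) by tolia.
  have -> : 3 + R = 0 + (1 + (2 + R)) by tolia.
  by rewrite Emod SM.
move/eqP: E1; rewrite eqn_modDr => /eqP E1.
have B3 : a + c + 2 < n + n by tolia.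
have B4 : 3 < n + n by tolia.
have E2 : a + c = 1 by case: (modeq2 B3 B4 E1) => [|[]]; tolia.
have : (a = 1) \/ (c = 1) by tolia.
case=> [Ha|Hc].
- move: Ha; rewrite /a /sig On => /sig0_01 H.
  have : s o0 = s o1 by apply: val_inj => /=; rewrite Hs H.
  by move/perm_inj/(congr1 val).
- move: Hc; rewrite /c /sig On => /sig0_21 H.
  have : L o2 (s o2) = L o1 (s o1).
    by apply: val_inj; rewrite /= Hs /sig On H /=.
  by move/Ht/(congr1 val).
Qed.
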